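(* Let $\mathcal{M}=(W,\leq,R,V)$ be an extended conditional intuitionistic model and define $\mathcal{M}^{n4}=(W,\leq,R^{n4},V^+,V^-)$ by $R^{n4}:=\{(w,(X,Y),v)\mid\exists u\,((w,X,u)\in R\ \&\ (u,Y,v)\in R)\}$, $V^+(p_i):=V(p_i)$, $V^-(p_i):=V(q_i)$. Then (1) $\mathcal{M}^{n4}$ is a Nelsonian conditional model, and (2) for every $w\in W$ and every $\phi\in\mathcal{L}_{\Box\!\!\rightarrow}$, $\mathcal{M}^{n4},w\models^+\phi$ iff $\mathcal{M},w\models^iE^\pm(\phi)$.
   Context: $\mathcal{L}_{\Box\!\!\rightarrow}$ is built from variables $p_0,p_1,\dots$ with $\wedge,\vee,\to$, strong negation $\sim$, and a binary would-conditional $\Box\!\!\rightarrow$. A Nelsonian conditional model is $(W,\leq,R,V^+,V^-)$ with $W\neq\emptyset$, $\leq$ a preorder, $V^\pm$ assigning upward-closed sets to variables, $R\subseteq W\times(\mathcal{P}(W)\times\mathcal{P}(W))\times W$ satisfying for all $X,Y$: (c1) $w\leq w'$ and $R_{(X,Y)}(w,v)$ imply $R_{(X,Y)}(w',v')$ for some $v'\geq v$; (c2) $R_{(X,Y)}(w,v)$ and $v\leq v'$ imply $R_{(X,Y)}(w',v')$ for some $w'\geq w$. Verification $\models^+$/falsification $\models^-$: atoms by $V^\pm$; $\wedge$ verified iff both verified, falsified iff one falsified; $\vee$ dually; $\sim$ swaps; $w\models^+\psi\to\chi$ iff for all $v\geq w$, $v\models^+\psi$ implies $v\models^+\chi$;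 $w\models^-\psi\to\chi$ iff $w\models^+\psi$ and $w\models^-\chi$; $w\models^+\psi\Box\!\!\rightarrow\chi$ iff for all $v\geq w$ and $u$ with $R_{\|\psi\|}(v,u)$, $u\models^+\chi$; $w\models^-\psi\Box\!\!\rightarrow\chi$ iff some $u$ has $R_{\|\psi\|}(w,u)$ and $u\models^-\chi$; $\|\psi\|=(\{w\mid w\models^+\psi\},\{w\mid w\models^-\psi\})$. The target language $\mathcal{L}^{e+}_{(\Box\!\!\rightarrow,\Diamond\!\!\rightarrow)}$ has variables $p_i$ and extra variables $q_i$, connectives $\wedge,\vee,\to$ and primitive binary $\Box\!\!\rightarrow$, $\Diamond\!\!\rightarrow$ (no negation). An extended conditional intuitionistic model is $(W,\leq,R,V)$ with $\leq$ a preorder, $V$ assigning upward-closed sets to all $p_i,q_i$, $R\subseteq W\times\mathcal{P}(W)\times W$ such that for all $X$: if $w\leq w'$ and $R_X(w,v)$ then $R_X(w',v')$ for some $v'\geq v$; if $R_X(w,v)$ and $v\leq v'$ then $R_X(w',v')$ for some $w'\geq w$. $\models^i$: atoms by $V$; $\wedge,\vee$ pointwise; $w\models^i\psi\to\chi$ iff for all $v\geq w$, $v\models^i\psi$ implies $v\models^i\chi$; $w\models^i\psi\Box\!\!\rightarrow\chi$ iff for all $v\geq w$ and $u$ with $R_{\|\psi\|^i}(v,u)$, $u\models^i\chi$; $w\models^i\psi\Diamond\!\!\rightarrow\chi$ iff some $u$ has $R_{\|\psi\|^i}(w,u)$ and $u\models^i\chi$; $\|\psi\|^i=\{w\mid w\models^i\psi\}$.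 The translation $E^\pm$: $E^\pm(p_i)=p_i$, $E^\pm(\sim p_i)=q_i$, $E^\pm(\phi\wedge\psi)=E^\pm(\phi)\wedge E^\pm(\psi)$, $E^\pm(\sim(\phi\wedge\psi))=E^\pm(\sim\phi)\vee E^\pm(\sim\psi)$, $E^\pm(\phi\vee\psi)=E^\pm(\phi)\vee E^\pm(\psi)$, $E^\pm(\sim(\phi\vee\psi))=E^\pm(\sim\phi)\wedge E^\pm(\sim\psi)$, $E^\pm(\sim\sim\phi)=E^\pm(\phi)$, $E^\pm(\phi\to\psi)=E^\pm(\phi)\to E^\pm(\psi)$, $E^\pm(\sim(\phi\to\psi))=E^\pm(\phi)\wedge E^\pm(\sim\psi)$, $E^\pm(\phi\Box\!\!\rightarrow\psi)=E^\pm(\phi)\Box\!\!\rightarrow(E^\pm(\sim\phi)\Box\!\!\rightarrow E^\pm(\psi))$, $E^\pm(\sim(\phi\Box\!\!\rightarrow\psi))=E^\pm(\phi)\Diamond\!\!\rightarrow(E^\pm(\sim\phi)\Diamond\!\!\rightarrow E^\pm(\sim\psi))$. *)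

(* Defs.v *)
Set Implicit Arguments.

Inductive nform : Type :=
| NVar : nat -> nform
| NAnd : nform -> nform -> nform
| NOr  : nform -> nform -> nform
| NImp : nform -> nform -> nform
| NNeg : nform -> nform               (* strong negation ~ *)
| NBox : nform -> nform -> nform.

Inductive iform : Type :=
| IP   : nat -> iform
| IQ   : nat -> iform
| IAnd : iform -> iform -> iform
| IOr  : iform -> iform -> iform
| IImp : iform -> iform -> iform
| IBox : iform -> iform -> iform
| IDia : iform -> iform -> iform.

(* ---------- Translation E^{+-} ----------
   Etr true phi  = E^{+-}(phi)
   Etr false phi = E^{+-}(~ phi)                                    *)
Fixpoint Etr (pos : bool) (phi : nform) : iform :=
  match phi with
  | NVar i => if pos then IP i else IQ i
  | NAnd a b => if pos then IAnd (Etr true a) (Etr true b)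
                else IOr (Etr false a) (Etr false b)
  | NOr a b => if pos then IOr (Etr true a) (Etr true b)
               else IAnd (Etr false a) (Etr false b)
  | NImp a b => if pos then IImp (Etr true a) (Etr true b)
                else IAnd (Etr true a) (Etr false b)
  | NNeg a => Etr (negb pos) a
  | NBox a b => if pos then IBox (Etr true a) (IBox (Etr false a) (Etr true b))
                else IDia (Etr true a) (IDia (Etr false a) (Etr false b))
  end.

Definition E (phi : nform) : iform := Etr true phi.

Definition is_preorder (W : Type) (le : W -> W -> Prop) : Prop :=
  (forall w, le w w) /\ (forall u v w, le u v -> le v w -> le u w).

Definition upward_closed (W : Type) (le : W -> W -> Prop) (X : W -> Prop) : Prop :=
  forall w w', le w w' -> X w -> X w'.

(* ---------- Extended conditional intuitionistic models ----------
   R X w v  stands for  R_X(w,v), i.e. (w,X,v) in R.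
   Vp i = V(p_i), Vq i = V(q_i).                                    *)
Definition is_ECI_model (W : Type) (le : W -> W -> Prop)
    (R : (W -> Prop) -> W -> W -> Prop) (Vp Vq : nat -> W -> Prop) : Prop :=
  inhabited W /\
  is_preorder le /\
  (forall i, upward_closed le (Vp i)) /\
  (forall i, upward_closed le (Vq i)) /\
  (forall X w w' v, le w w' -> R X w v -> exists v', R X w' v' /\ le v v') /\
  (forall X w v v', R X w v -> le v v' -> exists w', R X w' v' /\ le w w').

Fixpoint isat (W : Type) (le : W -> W -> Prop)
    (R : (W -> Prop) -> W -> W -> Prop) (Vp Vq : nat -> W -> Prop)
    (w : W) (phi : iform) : Prop :=
  match phi with
  | IP i => Vp i w
  | IQ i => Vq i w
  | IAnd a b => isat le R Vp Vq w a /\ isat le R Vp Vq w b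
  | IOr a b => isat le R Vp Vq w a \/ isat le R Vp Vq w b
  | IImp a b => forall v, le w v -> isat le R Vp Vq v a -> isat le R Vp Vq v b
  | IBox a b => forall v u, le w v -> R (fun x => isat le R Vp Vq x a) v u ->
                  isat le R Vp Vq u b
  | IDia a b => exists u, R (fun x => isat le R Vp Vq x a) w u /\
                  isat le R Vp Vq u b
  end.

(* ---------- Nelsonian conditional models ----------
   NR X Y w v  stands for  R_{(X,Y)}(w,v).                          *)
Definition is_Nelson_model (W : Type) (le : W -> W -> Prop)
    (NR : (W -> Prop) -> (W -> Prop) -> W -> W -> Prop)
    (Vplus Vminus : nat -> W -> Prop) : Prop :=
  inhabited W /\
  is_preorder le /\
  (forall i, upward_closed le (Vplus i)) /\
  (forall i, upward_closed le (Vminus i)) /\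
  (forall X Y w w' v, le w w' -> NR X Y w v -> exists v', NR X Y w' v' /\ le v v') /\
  (forall X Y w v v', NR X Y w v -> le v v' -> exists w', NR X Y w' v' /\ le w w').

(* nsat true  w phi  :  w |=+ phi  (verification)
   nsat false w phi  :  w |=- phi  (falsification)                  *)
Fixpoint nsat (W : Type) (le : W -> W -> Prop)
    (NR : (W -> Prop) -> (W -> Prop) -> W -> W -> Prop)
    (Vplus Vminus : nat -> W -> Prop)
    (pos : bool) (w : W) (phi : nform) : Prop :=
  match phi with
  | NVar i => if pos then Vplus i w else Vminus i w
  | NAnd a b => if pos then nsat le NR Vplus Vminus true w a /\ nsat le NR Vplus Vminus true w b
                else nsat le NR Vplus Vminus false w a \/ nsat le NR Vplus Vminus false w b
  | NOr a b => if pos then nsat le NR Vplus Vminus true w a \/ nsat le NR Vplus Vminus true w b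
               else nsat le NR Vplus Vminus false w a /\ nsat le NR Vplus Vminus false w b
  | NImp a b =>
      if pos then forall v, le w v -> nsat le NR Vplus Vminus true v a ->
                    nsat le NR Vplus Vminus true v b
      else nsat le NR Vplus Vminus true w a /\ nsat le NR Vplus Vminus false w b
  | NNeg a => nsat le NR Vplus Vminus (negb pos) w a
  | NBox a b =>
      if pos then
        forall v u, le w v ->
          NR (fun x => nsat le NR Vplus Vminus true x a)
             (fun x => nsat le NR Vplus Vminus false x a) v u ->
          nsat le NR Vplus Vminus true u b
      else
        exists u, NR (fun x => nsat le NR Vplus Vminus true x a)
                     (fun x => nsat le NR Vplus Vminus false x a) w u /\
                  nsat le NR Vplus Vminus false u b
  end.

Definition Rn4 (W : Type) (R : (W -> Prop) -> W -> W -> Prop)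
    (X Y : W -> Prop) (w v : W) : Prop :=
  exists u, R X w u /\ R Y u v.

(* Main.v *)
Require Import Defs.
From Stdlib Require Import FunctionalExtensionality PropExtensionality.

Theorem lemma14 (W : Type) (le : W -> W -> Prop)
    (R : (W -> Prop) -> W -> W -> Prop) (Vp Vq : nat -> W -> Prop) :
  is_ECI_model le R Vp Vq ->
  is_Nelson_model le (Rn4 R) Vp Vq /\
  (forall (w : W) (phi : nform),
      nsat le (Rn4 R) Vp Vq true w phi <-> isat le R Vp Vq w (E phi)).
Proof.
  intros [Hinh [[Hrefl Htrans] [HVp [HVq [Hc1 Hc2]]]]].
  assert (Key : forall phi pos w,
    nsat le (Rn4 R) Vp Vq pos w phi <-> isat le R Vp Vq w (Etr pos phi)).
  { induction phi as [i|a IHa b IHb|a IHa b IHb|a IHa b IHb|a IHa|a IHa b IHb];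
      intros pos w; destruct pos; simpl; try tauto.
    - rewrite IHa, IHb; tauto.
    - rewrite IHa, IHb; tauto.
    - rewrite IHa, IHb; tauto.
    - rewrite IHa, IHb; tauto.
    - split; intros H v Hv; specialize (H v Hv); rewrite IHa, IHb in *; exact H.
    - rewrite IHa, IHb; tauto.
    - apply IHa.
    - apply IHa.
    - assert (EA : (fun x => nsat le (Rn4 R) Vp Vq true x a) =
                   (fun x => isat le R Vp Vq x (Etr true a))).
      { apply functional_extensionality; intro x; apply propositional_extensionality; apply IHa. }
      assert (EB : (fun x => nsat le (Rn4 R) Vp Vq false x a) =
                   (fun x => isat le R Vp Vq x (Etr false a))).
      { apply functional_extensionality; intro x; apply propositional_extensionality; apply IHa. }
      rewrite EA, EB. split.
      + intros H v m Hv HR1 v' u Hm HR2.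
        destruct (Hc2 _ _ _ _ HR1 Hm) as [v'' [HR1' Hv'']].
        apply IHb. apply (H v'' u). eapply Htrans; eauto.
        exists v'; split; assumption.
      + intros H v u Hv [m [HR1 HR2]].
        apply IHb. apply (H v m Hv HR1 m u (Hrefl m) HR2).
    - assert (EA : (fun x => nsat le (Rn4 R) Vp Vq true x a) =
                   (fun x => isat le R Vp Vq x (Etr true a))).
      { apply functional_extensionality; intro x; apply propositional_extensionality; apply IHa. }
      assert (EB : (fun x => nsat le (Rn4 R) Vp Vq false x a) =
                   (fun x => isat le R Vp Vq x (Etr false a))).
      { apply functional_extensionality; intro x; apply propositional_extensionality; apply IHa. }
      rewrite EA, EB. split.
      + intros [u [[m [H1 H2]] H3]]. exists m; split; [exact H1|].
        exists u; split; [exact H2|]. apply IHb; exact H3.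
      + intros [m [H1 [u [H2 H3]]]]. exists u; split.
        * exists m; split; assumption.
        * apply IHb; exact H3. }
  split.
  - split; [exact Hinh|]. split; [split; assumption|]. split; [exact HVp|]. split; [exact HVq|]. split.
    + intros X Y w w' v Hw [m [H1 H2]].
      destruct (Hc1 _ _ _ _ Hw H1) as [m' [H1' Hm]].
      destruct (Hc1 _ _ _ _ Hm H2) as [v' [H2' Hv]].
      exists v'; split; [exists m'; split; assumption | exact Hv].
    + intros X Y w v v' [m [H1 H2]] Hv.
      destruct (Hc2 _ _ _ _ H2 Hv) as [m' [H2' Hm]].
      destruct (Hc2 _ _ _ _ H1 Hm) as [w' [H1' Hw]].
      exists w'; split; [exists m'; split; assumption | exact Hw].
  - intros w phi; apply Key.
Qed.
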